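(* Let $X$, $X_m$, $P_m$, $J_m$ satisfy the approximation properties in the context. Let $B$ generate a strongly continuous semigroup $(S(t))_{t\ge0}$ on $X$ and let $B_m$ generate strongly continuous semigroups $(S_m(t))_{t\ge0}$ on $X_m$, with constants $M_S\ge1$, $\omega_S\in\mathbb{R}$ such that $\|S(h)\|\le M_Se^{\omega_Sh}$ and $\|S_m(h)\|\le M_Se^{\omega_Sh}$ for all $h>0$, $m\in\mathbb{N}$, and assume $\lim_{m\to\infty}J_mB_mP_mx=Bx$ for all $x\in D(B)$. Fix $t_0>0$. Then for all $t\in(0,t_0]$, $$\lim_{n,m\to\infty}\frac{J_mS_m(t/n)P_mx-J_mP_mx}{t/n}=Bx\quad\text{for all }x\in D(B),$$ where the limit as $m\to\infty$ is uniform in $n\in\mathbb{N}$.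
   Context: Approximation properties: $X_m$ ($m\in\mathbb{N}$) are Banach spaces and $P_m:X\to X_m$, $J_m:X_m\to X$ are bounded linear operators such that (i) $P_mJ_m=I_m$ (the identity on $X_m$) for all $m$; (ii) $\lim_{m\to\infty}J_mP_mx=x$ for all $x\in X$; (iii) $\|J_m\|\le M_J$, $\|P_m\|\le M_P$ for all $m$, for some constants $M_J,M_P>0$. A double limit $\lim_{n,m\to\infty}a_{n,m}=a$ means: for every $\varepsilon>0$ there is $N$ with $\|a_{n,m}-a\|\le\varepsilon$ for all $n,m\ge N$. *)

(* Defs.v *)
From Stdlib Require Import Reals Lra.
Open Scope R_scope.

Record NormedSpace := {
  car :> Type;
  vzero : car;
  vadd : car -> car -> car;
  vopp : car -> car;
  vscal : R -> car -> car;
  vnorm : car -> R;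
  vadd_assoc : forall x y z, vadd x (vadd y z) = vadd (vadd x y) z;
  vadd_comm : forall x y, vadd x y = vadd y x;
  vadd_zero : forall x, vadd x vzero = x;
  vadd_opp : forall x, vadd x (vopp x) = vzero;
  vscal_one : forall x, vscal 1 x = x;
  vscal_assoc : forall a b x, vscal a (vscal b x) = vscal (a * b) x;
  vscal_distr_v : forall a x y, vscal a (vadd x y) = vadd (vscal a x) (vscal a y);
  vscal_distr_s : forall a b x, vscal (a + b) x = vadd (vscal a x) (vscal b x);
  vnorm_eq0 : forall x, vnorm x = 0 -> x = vzero;
  vnorm_triangle : forall x y, vnorm (vadd x y) <= vnorm x + vnorm y;
  vnorm_scal : forall a x, vnorm (vscal a x) = Rabs a * vnorm x
}.

Arguments vzero {_}.
Arguments vadd {_} _ _.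
Arguments vopp {_} _.
Arguments vscal {_} _ _.
Arguments vnorm {_} _.

Definition vsub {V : NormedSpace} (x y : V) : V := vadd x (vopp y).

Definition seq_lim {V : NormedSpace} (u : nat -> V) (l : V) : Prop :=
  forall eps, 0 < eps -> exists N : nat, forall n, (N <= n)%nat ->
    vnorm (vsub (u n) l) <= eps.

Definition complete (V : NormedSpace) : Prop :=
  forall u : nat -> V,
    (forall eps, 0 < eps -> exists N : nat, forall n k, (N <= n)%nat -> (N <= k)%nat ->
       vnorm (vsub (u n) (u k)) <= eps) ->
    exists l, seq_lim u l.

Definition is_linear {V W : NormedSpace} (f : V -> W) : Prop :=
  (forall x y, f (vadd x y) = vadd (f x) (f y)) /\
  (forall a x, f (vscal a x) = vscal a (f x)).

Definition bounded_linear {V W : NormedSpace} (f : V -> W) : Prop :=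
  is_linear f /\ exists C, forall x, vnorm (f x) <= C * vnorm x.

Definition opnorm_le {V W : NormedSpace} (f : V -> W) (M : R) : Prop :=
  forall x, vnorm (f x) <= M * vnorm x.

Definition lim_0plus {V : NormedSpace} (f : R -> V) (l : V) : Prop :=
  forall eps, 0 < eps -> exists delta, 0 < delta /\
    forall h, 0 < h < delta -> vnorm (vsub (f h) l) <= eps.

Definition C0_semigroup {V : NormedSpace} (S : R -> V -> V) : Prop :=
  (forall t, 0 <= t -> bounded_linear (S t)) /\
  (forall x, S 0 x = x) /\
  (forall t s x, 0 <= t -> 0 <= s -> S (t + s) x = S t (S s x)) /\
  (forall x, lim_0plus (fun t => S t x) x).

Definition generator {V : NormedSpace} (S : R -> V -> V)
    (D : V -> Prop) (B : V -> V) : Prop :=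
  (forall x, D x <-> exists y, lim_0plus (fun h => vscal (/ h) (vsub (S h x) x)) y) /\
  (forall x, D x -> lim_0plus (fun h => vscal (/ h) (vsub (S h x) x)) (B x)).

Definition generates {V : NormedSpace} (D : V -> Prop) (B : V -> V)
    (S : R -> V -> V) : Prop :=
  C0_semigroup S /\ generator S D B.

(* Main.v *)
Require Import Defs.
From Stdlib Require Import Reals Lra Lia List ZArith.
Open Scope R_scope.

Section Vec.
Variable V : NormedSpace.
Implicit Types x y z : V.

Lemma vadd_zero_l x : vadd vzero x = x.
Proof. rewrite vadd_comm; apply vadd_zero. Qed.

Lemma vopp_unique x y : vadd x y = vzero -> y = vopp x.
Proof.
  intro H. rewrite <- (vadd_zero _ y), <- (vadd_opp _ x), vadd_assoc.
  rewrite (vadd_comm _ y x), H. apply vadd_zero_l.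
Qed.

Lemma vscal_zero_s x : vscal 0 x = vzero.
Proof.
  assert (H : vscal 0 x = vadd (vscal 0 x) (vscal 0 x)).
  { rewrite <- vscal_distr_s. f_equal. ring. }
  assert (H2 : vadd (vscal 0 x) (vopp (vscal 0 x)) = vzero) by apply vadd_opp.
  rewrite H in H2 at 1. rewrite <- vadd_assoc, vadd_opp, vadd_zero in H2. exact H2.
Qed.

Lemma vopp_scal x : vopp x = vscal (-1) x.
Proof.
  symmetry. apply vopp_unique.
  rewrite <- (vscal_one _ x) at 1. rewrite <- vscal_distr_s.
  replace (1 + -1) with 0 by ring. apply vscal_zero_s.
Qed.

Lemma vscal_zero_v a : vscal a (@vzero V) = vzero.
Proof.
  rewrite <- (vscal_zero_s vzero). rewrite vscal_assoc, Rmult_0_r. reflexivity.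
Qed.

Lemma vnorm_zero : vnorm (@vzero V) = 0.
Proof. rewrite <- (vscal_zero_s vzero), vnorm_scal, Rabs_R0. ring. Qed.

Lemma vnorm_opp x : vnorm (vopp x) = vnorm x.
Proof. rewrite vopp_scal, vnorm_scal. replace (Rabs (-1)) with 1. ring.
  rewrite Rabs_left; lra. Qed.

Lemma vnorm_nonneg x : 0 <= vnorm x.
Proof.
  assert (H := vnorm_triangle _ x (vopp x)).
  rewrite vadd_opp, vnorm_zero, vnorm_opp in H. lra.
Qed.

Lemma vsub_eq0 x y : vnorm (vsub x y) = 0 -> x = y.
Proof.
  intro H. apply vnorm_eq0 in H. unfold vsub in H.
  apply vopp_unique in H.
  assert (K : forall u : V, vopp (vopp u) = u).
  { intro u. rewrite !vopp_scal, vscal_assoc. replace (-1 * -1) with 1 by ring. apply vscal_one. }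
  rewrite <- (K x), <- H, K. reflexivity.
Qed.

Inductive vex := At (n : nat) | Z0 | Add (a b : vex) | Opp (a : vex)
  | Scal (r : R) (a : vex) | Sub (a b : vex).

Fixpoint ev (env : list V) (e : vex) : V :=
  match e with
  | At n => nth n env vzero
  | Z0 => vzero
  | Add a b => vadd (ev env a) (ev env b)
  | Opp a => vopp (ev env a)
  | Scal r a => vscal r (ev env a)
  | Sub a b => vsub (ev env a) (ev env b)
  end.

Fixpoint co (e : vex) : nat -> R :=
  match e with
  | At n => fun j => if Nat.eqb n j then 1 else 0
  | Z0 => fun _ => 0
  | Add a b => fun j => co a j + co b j
  | Opp a => fun j => - co a j
  | Scal r a => fun j => r * co a j
  | Sub a b => fun j => co a j - co b j
  end.

Fixpoint lin (env : list V) (c : nat -> R) : V :=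
  match env with
  | nil => vzero
  | v :: env' => vadd (vscal (c O) v) (lin env' (fun j => c (S j)))
  end.

Lemma lin_ext env : forall c1 c2, (forall j, c1 j = c2 j) -> lin env c1 = lin env c2.
Proof.
  induction env as [|v env IH]; intros c1 c2 H; simpl; auto.
  rewrite H. f_equal. apply IH. intro; apply H.
Qed.

Lemma vadd4 (a b c d : V) : vadd (vadd a b) (vadd c d) = vadd (vadd a c) (vadd b d).
Proof.
  rewrite <- !vadd_assoc. f_equal. rewrite !vadd_assoc. f_equal. apply vadd_comm.
Qed.

Lemma lin_add env : forall c1 c2,
  lin env (fun j => c1 j + c2 j) = vadd (lin env c1) (lin env c2).
Proof.
  induction env as [|v env IH]; intros; simpl. rewrite vadd_zero; auto.
  rewrite vscal_distr_s, IH. apply vadd4.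
Qed.

Lemma lin_scal env : forall r c, lin env (fun j => r * c j) = vscal r (lin env c).
Proof.
  induction env as [|v env IH]; intros; simpl. rewrite vscal_zero_v; auto.
  rewrite IH, vscal_distr_v, vscal_assoc. auto.
Qed.

Lemma lin_at env : forall n, lin env (fun j => if Nat.eqb n j then 1 else 0) = nth n env vzero.
Proof.
  induction env as [|v env IH]; intros n; simpl. destruct n; auto.
  destruct n as [|n]; simpl.
  - rewrite vscal_one. rewrite (lin_ext env _ (fun j => 0 * 0)).
    rewrite lin_scal, vscal_zero_s, vadd_zero; auto.
    intro j. destruct j; simpl; ring.
  - rewrite vscal_zero_s, vadd_zero_l. apply IH.
Qed.

Lemma ev_lin env e : ev env e = lin env (co e).
Proof.
  induction e; simpl.
  - symmetry; apply lin_at.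
  - rewrite (lin_ext env _ (fun j => 0 * 0)). rewrite lin_scal, vscal_zero_s; auto.
    intro; ring.
  - rewrite lin_add, IHe1, IHe2; auto.
  - rewrite (lin_ext env _ (fun j => -1 * co e j)). rewrite lin_scal, vopp_scal, IHe; auto.
    intro; ring.
  - rewrite lin_scal, IHe; auto.
  - rewrite (lin_ext env _ (fun j => co e1 j + (-1 * co e2 j))).
    rewrite lin_add, lin_scal, IHe1, IHe2. unfold vsub. rewrite vopp_scal; auto.
    intro; ring.
Qed.

Lemma ev_eq env e1 e2 : (forall j, co e1 j = co e2 j) -> ev env e1 = ev env e2.
Proof. intro H. rewrite !ev_lin. apply lin_ext, H. Qed.

End Vec.

Ltac find_idx x l :=
  match l with
  | (x :: _) => constr:(O)
  | (_ :: ?l') => let n := find_idx x l' in constr:(S n)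
  end.

Ltac reify env t :=
  match t with
  | @vadd _ ?a ?b => let ra := reify env a in let rb := reify env b in constr:(Add ra rb)
  | @vsub _ ?a ?b => let ra := reify env a in let rb := reify env b in constr:(Sub ra rb)
  | @vopp _ ?a => let ra := reify env a in constr:(Opp ra)
  | @vscal _ ?r ?a => let ra := reify env a in constr:(Scal r ra)
  | @vzero _ => constr:(Z0)
  | _ => let n := find_idx t env in constr:(At n)
  end.

Ltac leaf := first [ring | (field; repeat split; lra) | idtac].

Ltac solve_co l :=
  match l with
  | nil => intros; simpl; leaf
  | _ :: ?l' => let j := fresh "j" in intro j; destruct j as [|j];
       [simpl; leaf | revert j; solve_co l']
  end.

Ltac veq env :=
  match goal with
  | |- ?l = ?r =>
    let rl := reify env l in let rr := reify env r in
    change (ev _ env rl = ev _ env rr); apply ev_eq; solve_co env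
  end.

Section Vec2.
Variable V : NormedSpace.
Implicit Types x y z : V.
Lemma vsub_triangle x y z : vnorm (vsub x z) <= vnorm (vsub x y) + vnorm (vsub y z).
Proof.
  replace (vsub x z) with (vadd (vsub x y) (vsub y z)). apply vnorm_triangle.
  veq (x :: y :: z :: nil).
Qed.
Lemma vnorm_sub_sym x y : vnorm (vsub x y) = vnorm (vsub y x).
Proof.
  replace (vsub x y) with (vopp (vsub y x)). apply vnorm_opp. veq (x :: y :: nil).
Qed.
End Vec2.

Section Lin.
Variables V W : NormedSpace.
Variable f : V -> W.
Hypothesis Hf : is_linear f.
Lemma lin_add' x y : f (vadd x y) = vadd (f x) (f y). Proof. apply Hf. Qed.
Lemma lin_scal' a x : f (vscal a x) = vscal a (f x). Proof. apply Hf. Qed.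
Lemma lin_opp' x : f (vopp x) = vopp (f x).
Proof. rewrite !vopp_scal. apply Hf. Qed.
Lemma lin_sub' x y : f (vsub x y) = vsub (f x) (f y).
Proof. unfold vsub. rewrite lin_add', lin_opp'. auto. Qed.
Lemma lin_zero' : f vzero = vzero.
Proof. rewrite <- (vscal_zero_s _ vzero), lin_scal', vscal_zero_s. auto. Qed.
End Lin.


Lemma exp_le x y : x <= y -> exp x <= exp y.
Proof. intro H. destruct (Req_dec x y). subst; lra. left; apply exp_increasing; lra. Qed.

Lemma arch_nat r : exists n : nat, r < INR n.
Proof.
  destruct (archimed r) as [H1 H2].
  destruct (Z_le_gt_dec 0 (up r)) as [Hz|Hz].
  - exists (Z.to_nat (up r)). rewrite INR_IZR_INZ, Z2Nat.id; auto.
  - exists O. simpl. apply Z.gt_lt in Hz. apply IZR_lt in Hz. lra.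
Qed.

Lemma small_step a rho : 0 < a -> 0 < rho -> exists k : nat, (1 <= k)%nat /\ a / INR k < rho.
Proof.
  intros Ha Hr. destruct (arch_nat (a / rho)) as [n Hn].
  exists (S n). split. lia.
  assert (0 < INR (S n)) by (apply lt_0_INR; lia).
  rewrite S_INR in *. apply Rmult_lt_reg_r with (INR n + 1); auto.
  unfold Rdiv. rewrite Rmult_assoc, Rinv_l by lra.
  assert (a / rho * rho < INR n * rho + rho) by nra.
  unfold Rdiv in H0. rewrite Rmult_assoc, Rinv_l in H0 by lra. nra.
Qed.

Lemma le_eps a b c : 0 <= c -> (forall eps, 0 < eps -> a <= b + c * eps) -> a <= b.
Proof.
  intros Hc H. destruct (Rle_dec a b) as [|Hn]; auto. exfalso.
  assert (Hab : 0 < a - b) by lra.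
  specialize (H ((a - b) / (2 * (c + 1)))).
  assert (0 < (a - b) / (2 * (c + 1))) by (apply Rdiv_lt_0_compat; lra).
  specialize (H H0).
  assert (c * ((a - b) / (2 * (c + 1))) < a - b).
  { unfold Rdiv. apply Rmult_lt_reg_r with (2 * (c+1)). lra.
    rewrite !Rmult_assoc, Rinv_l by lra. nra. }
  lra.
Qed.

Lemma telescope (V : NormedSpace) (u : nat -> V) (b : R) (k : nat) :
  (forall j, (j < k)%nat -> vnorm (vsub (u (S j)) (u j)) <= b) ->
  vnorm (vsub (u k) (u O)) <= INR k * b.
Proof.
  induction k as [|k IH]; intro H.
  - simpl. replace (vsub (u O) (u O)) with (@vzero V) by veq (u O :: nil).
    rewrite vnorm_zero. lra.
  - rewrite S_INR. eapply Rle_trans. apply (vsub_triangle _ _ (u k)).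
    assert (vnorm (vsub (u k) (u O)) <= INR k * b) by (apply IH; intros; apply H; lia).
    assert (vnorm (vsub (u (S k)) (u k)) <= b) by (apply H; lia). lra.
Qed.

Section Lim.
Variable V : NormedSpace.

Lemma lim_unique (f : R -> V) a b : lim_0plus f a -> lim_0plus f b -> a = b.
Proof.
  intros Ha Hb. apply vsub_eq0. apply Rle_antisym; [|apply vnorm_nonneg].
  apply (le_eps _ 0 2). lra. intros eps He.
  destruct (Ha eps He) as [d1 [Hd1 H1]]. destruct (Hb eps He) as [d2 [Hd2 H2]].
  set (h := Rmin d1 d2 / 2).
  assert (0 < Rmin d1 d2) by (apply Rmin_glb_lt; auto).
  assert (Rmin d1 d2 <= d1) by apply Rmin_l. assert (Rmin d1 d2 <= d2) by apply Rmin_r.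
  assert (A1 := H1 h ltac:(unfold h; lra)). assert (A2 := H2 h ltac:(unfold h; lra)).
  eapply Rle_trans. apply (vsub_triangle _ _ (f h)). rewrite vnorm_sub_sym. lra.
Qed.

Lemma lim_ext_pos (f g : R -> V) a : (forall h, 0 < h -> f h = g h) ->
  lim_0plus f a -> lim_0plus g a.
Proof.
  intros E H eps He. destruct (H eps He) as [d [Hd H1]]. exists d; split; auto.
  intros h Hh. rewrite <- E by lra. auto.
Qed.

Lemma lim_sub (f g : R -> V) a b : lim_0plus f a -> lim_0plus g b ->
  lim_0plus (fun h => vsub (f h) (g h)) (vsub a b).
Proof.
  intros Ha Hb eps He.
  destruct (Ha (eps/2) ltac:(lra)) as [d1 [Hd1 H1]]. destruct (Hb (eps/2) ltac:(lra)) as [d2 [Hd2 H2]].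
  exists (Rmin d1 d2). split. apply Rmin_glb_lt; auto.
  intros h Hh. assert (Rmin d1 d2 <= d1) by apply Rmin_l. assert (Rmin d1 d2 <= d2) by apply Rmin_r.
  assert (A1 := H1 h ltac:(lra)). assert (A2 := H2 h ltac:(lra)).
  replace (vsub (vsub (f h) (g h)) (vsub a b)) with
    (vadd (vsub (f h) a) (vopp (vsub (g h) b))) by veq (f h :: g h :: a :: b :: nil).
  eapply Rle_trans. apply vnorm_triangle. rewrite vnorm_opp. lra.
Qed.

Lemma lim_scal (f : R -> V) a c : lim_0plus f a ->
  lim_0plus (fun h => vscal c (f h)) (vscal c a).
Proof.
  intros Ha eps He.
  destruct (Ha (eps/(Rabs c + 1))) as [d [Hd H1]].
  { apply Rdiv_lt_0_compat; auto. assert (0 <= Rabs c) by apply Rabs_pos. lra. }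
  exists d; split; auto. intros h Hh.
  replace (vsub (vscal c (f h)) (vscal c a)) with (vscal c (vsub (f h) a)) by veq (f h :: a :: nil).
  rewrite vnorm_scal. specialize (H1 h Hh).
  assert (0 <= Rabs c) by apply Rabs_pos. assert (0 <= vnorm (vsub (f h) a)) by apply vnorm_nonneg.
  apply Rle_trans with (Rabs c * (eps / (Rabs c + 1))). apply Rmult_le_compat_l; auto.
  unfold Rdiv. rewrite <- Rmult_assoc. apply Rmult_le_reg_r with (Rabs c + 1). lra.
  rewrite Rmult_assoc, Rinv_l by lra. nra.
Qed.
End Lim.

Lemma lim_map (V W : NormedSpace) (L : V -> W) C (f : R -> V) a :
  is_linear L -> opnorm_le L C -> lim_0plus f a -> lim_0plus (fun h => L (f h)) (L a).
Proof.
  intros HL HC Ha eps He.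
  destruct (Ha (eps/(Rabs C + 1))) as [d [Hd H1]].
  { apply Rdiv_lt_0_compat; auto. assert (0 <= Rabs C) by apply Rabs_pos. lra. }
  exists d; split; auto. intros h Hh.
  rewrite <- (lin_sub' _ _ L HL). eapply Rle_trans. apply HC.
  specialize (H1 h Hh).
  assert (0 <= Rabs C) by apply Rabs_pos. assert (0 <= vnorm (vsub (f h) a)) by apply vnorm_nonneg.
  assert (C <= Rabs C) by apply Rle_abs.
  apply Rle_trans with (Rabs C * (eps / (Rabs C + 1))).
  apply Rle_trans with (Rabs C * vnorm (vsub (f h) a)). nra. apply Rmult_le_compat_l; auto.
  unfold Rdiv. rewrite <- Rmult_assoc. apply Rmult_le_reg_r with (Rabs C + 1). lra.
  rewrite Rmult_assoc, Rinv_l by lra. nra.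
Qed.

Section Semi.
Variable V : NormedSpace.
Variable T : R -> V -> V.
Variable D : V -> Prop.
Variable A : V -> V.
Hypothesis HT : generates D A T.
Variables M om : R.
Hypothesis HM : 1 <= M.
Hypothesis Hb : forall h, 0 < h -> opnorm_le (T h) (M * exp (om * h)).

Definition Cb (h : R) := M * exp (Rabs om * h).

Lemma Cb_ge1 h : 0 <= h -> 1 <= Cb h.
Proof.
  intro. unfold Cb. assert (1 <= exp (Rabs om * h)).
  { rewrite <- exp_0. apply exp_le. assert (0 <= Rabs om) by apply Rabs_pos. nra. }
  nra.
Qed.

Lemma Cb_mono h h' : 0 <= h <= h' -> Cb h <= Cb h'.
Proof.
  intro. unfold Cb. apply Rmult_le_compat_l. lra. apply exp_le.
  assert (0 <= Rabs om) by apply Rabs_pos. nra.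
Qed.

Lemma T_lin t : 0 <= t -> is_linear (T t).
Proof. intro. destruct HT as [[H1 _] _]. apply (H1 t H). Qed.

Lemma T0 y : T 0 y = y.
Proof. destruct HT as [[_ [H _]] _]. apply H. Qed.

Lemma T_add t s y : 0 <= t -> 0 <= s -> T (t + s) y = T t (T s y).
Proof. destruct HT as [[_ [_ [H _]]] _]. apply H. Qed.

Lemma T_bound t h y : 0 <= t <= h -> vnorm (T t y) <= Cb h * vnorm y.
Proof.
  intro Ht. assert (0 <= vnorm y) by apply vnorm_nonneg.
  destruct (Req_dec t 0) as [E|E].
  - subst. rewrite T0. assert (1 <= Cb h) by (apply Cb_ge1; lra). nra.
  - eapply Rle_trans. apply Hb; lra. apply Rmult_le_compat_r; auto.
    unfold Cb. apply Rmult_le_compat_l. lra. apply exp_le.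
    assert (om * t <= Rabs om * t) by (apply Rmult_le_compat_r; [lra|apply Rle_abs]).
    assert (0 <= Rabs om) by apply Rabs_pos. nra.
Qed.

Lemma T_opn t h : 0 <= t <= h -> opnorm_le (T t) (Cb h).
Proof. intros H y. apply T_bound; auto. Qed.

Lemma gen_lim y : D y -> lim_0plus (fun h => vscal (/ h) (vsub (T h y) y)) (A y).
Proof. destruct HT as [_ [_ H]]. apply H. Qed.

Lemma gen_dom y a : lim_0plus (fun h => vscal (/ h) (vsub (T h y) y)) a -> D y.
Proof. destruct HT as [_ [H _]]. intro. apply H. eauto. Qed.

Lemma T_inv t y : 0 <= t -> D y -> D (T t y) /\ A (T t y) = T t (A y).
Proof.
  intros Ht Hy.
  assert (L : lim_0plus (fun h => vscal (/ h) (vsub (T h (T t y)) (T t y))) (T t (A y))).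
  { eapply lim_ext_pos; [|apply (lim_map _ _ (T t) (Cb t)); [apply T_lin; lra| apply T_opn; lra| apply gen_lim, Hy]].
    intros h Hh. simpl. rewrite <- T_add by lra. rewrite Rplus_comm, T_add by lra.
    rewrite (lin_scal' _ _ _ (T_lin t Ht)), (lin_sub' _ _ _ (T_lin t Ht)). auto. }
  assert (Dd : D (T t y)) by (eapply gen_dom; eauto).
  split; auto. eapply lim_unique. apply gen_lim; auto. auto.
Qed.

Lemma D_sub y1 y2 : D y1 -> D y2 -> D (vsub y1 y2).
Proof.
  intros H1 H2. apply gen_dom with (vsub (A y1) (A y2)).
  eapply lim_ext_pos; [|apply lim_sub; apply gen_lim; eauto].
  intros h Hh. simpl. rewrite (lin_sub' _ _ _ (T_lin h ltac:(lra))).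
  veq (T h y1 :: T h y2 :: y1 :: y2 :: nil).
Qed.

Lemma D_scal c y : D y -> D (vscal c y).
Proof.
  intros H1. apply gen_dom with (vscal c (A y)).
  eapply lim_ext_pos; [|apply lim_scal; apply gen_lim; eauto].
  intros h Hh. simpl. rewrite (lin_scal' _ _ _ (T_lin h ltac:(lra))).
  veq (T h y :: y :: nil).
Qed.

Lemma T_cont_unif t t' h y : 0 <= t -> t <= t' -> t' <= h ->
  vnorm (vsub (T t' y) (T t y)) <= Cb h * vnorm (vsub (T (t' - t) y) y).
Proof.
  intros. replace t' with (t + (t' - t)) at 1 by ring. rewrite T_add by lra.
  rewrite <- (lin_sub' _ _ _ (T_lin t ltac:(lra))). apply T_bound. lra.
Qed.

Lemma mvt y d K : D y -> 0 < d ->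
  (forall r, 0 <= r <= d -> vnorm (vsub (T r (A y)) (A y)) <= K) ->
  vnorm (vsub (vsub (T d y) y) (vscal d (A y))) <= d * K.
Proof.
  intros Hy Hd HK.
  assert (HC : 1 <= Cb d) by (apply Cb_ge1; lra).
  apply (le_eps _ _ (d * Cb d)). nra. intros eps He.
  destruct (gen_lim y Hy eps He) as [rho [Hrho Hr]].
  destruct (small_step d rho Hd Hrho) as [k [Hk Hkr]].
  assert (Hk0 : 0 < INR k) by (apply lt_0_INR; lia).
  set (dd := d / INR k).
  assert (Hdd : 0 < dd) by (unfold dd; apply Rdiv_lt_0_compat; lra).
  set (u := fun j : nat => vsub (T (INR j * dd) y) (vscal (INR j * dd) (A y))).
  assert (Ek : INR k * dd = d) by (unfold dd; field; lra).
  assert (E : vsub (vsub (T d y) y) (vscal d (A y)) = vsub (u k) (u O)).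
  { unfold u. rewrite Ek. simpl. rewrite Rmult_0_l, T0. veq (T d y :: y :: A y :: nil). }
  rewrite E. replace (d * K + d * Cb d * eps) with (INR k * (dd * Cb d * eps + dd * K))
    by (rewrite <- Ek; ring).
  apply telescope. intros j Hj.
  assert (Hj' : INR j * dd + dd <= d).
  { rewrite <- Ek. replace (INR j * dd + dd) with (INR (S j) * dd) by (rewrite S_INR; ring).
    apply Rmult_le_compat_r. lra. apply le_INR. lia. }
  assert (Hj0 : 0 <= INR j * dd) by (apply Rmult_le_pos; [apply pos_INR|lra]).
  assert (Hstep : vsub (u (S j)) (u j) =
     vadd (T (INR j * dd) (vsub (vsub (T dd y) y) (vscal dd (A y))))
          (vscal dd (vsub (T (INR j * dd) (A y)) (A y)))).
  { unfold u. rewrite S_INR. replace ((INR j + 1) * dd) with (INR j * dd + dd) by ring.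
    rewrite T_add by lra.
    rewrite (lin_sub' _ _ _ (T_lin _ Hj0)), (lin_sub' _ _ _ (T_lin _ Hj0)),
      (lin_scal' _ _ _ (T_lin _ Hj0)).
    veq (T (INR j * dd) (T dd y) :: T (INR j * dd) y :: T (INR j * dd) (A y) :: A y :: nil). }
  rewrite Hstep. eapply Rle_trans. apply vnorm_triangle. rewrite vnorm_scal, Rabs_pos_eq by lra.
  apply Rplus_le_compat.
  - eapply Rle_trans. apply (T_bound _ d). lra.
    replace (dd * Cb d * eps) with (Cb d * (dd * eps)) by ring.
    apply Rmult_le_compat_l. lra.
    assert (Hdr : dd < rho) by (unfold dd; lra). specialize (Hr dd ltac:(lra)).
    replace (vsub (vsub (T dd y) y) (vscal dd (A y))) with
      (vscal dd (vsub (vscal (/ dd) (vsub (T dd y) y)) (A y))) by veq (T dd y :: y :: A y :: nil).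
    rewrite vnorm_scal, Rabs_pos_eq by lra. apply Rmult_le_compat_l; lra.
  - apply Rmult_le_compat_l. lra. apply HK. lra.
Qed.

Lemma smooth y s : D y -> 0 < s <= 1 ->
  vnorm (vsub (T s y) y) <= s * (Cb 1 + 2) * vnorm (A y).
Proof.
  intros Hy Hs.
  assert (H := mvt y s ((Cb 1 + 1) * vnorm (A y)) Hy ltac:(lra)).
  assert (HAy := vnorm_nonneg _ (A y)).
  assert (H' : vnorm (vsub (vsub (T s y) y) (vscal s (A y))) <= s * ((Cb 1 + 1) * vnorm (A y))).
  { apply H. intros r Hr. eapply Rle_trans. apply vnorm_triangle. rewrite vnorm_opp.
    assert (vnorm (T r (A y)) <= Cb 1 * vnorm (A y)) by (apply T_bound; lra). lra. }
  replace (vsub (T s y) y) with (vadd (vsub (vsub (T s y) y) (vscal s (A y))) (vscal s (A y)))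
    by veq (T s y :: y :: A y :: nil).
  eapply Rle_trans. apply vnorm_triangle. rewrite vnorm_scal, Rabs_pos_eq by lra. nra.
Qed.

End Semi.

Lemma fin_N (Q : nat -> nat -> Prop) (k : nat) :
  (forall j, (j < k)%nat -> exists N, forall m, (N <= m)%nat -> Q j m) ->
  exists N, forall j m, (j < k)%nat -> (N <= m)%nat -> Q j m.
Proof.
  induction k as [|k IH]; intro H.
  - exists O. intros; lia.
  - destruct IH as [N1 H1]. intros; apply H; lia.
    destruct (H k ltac:(lia)) as [N2 H2].
    exists (Nat.max N1 N2). intros j m Hj Hm.
    destruct (Nat.eq_dec j k). subst. apply H2; lia. apply H1; lia.
Qed.

Lemma fin_max (f : nat -> R) (k : nat) : exists K, 0 <= K /\ forall j, (j < k)%nat -> f j <= K.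
Proof.
  induction k as [|k [K [HK0 HK]]].
  - exists 0. split. lra. intros; lia.
  - exists (Rmax K (f k)). split. eapply Rle_trans; [apply HK0| apply Rmax_l].
    intros j Hj. destruct (Nat.eq_dec j k). subst. apply Rmax_r.
    eapply Rle_trans; [apply HK; lia| apply Rmax_l].
Qed.

Lemma seq_bounded (V : NormedSpace) (u : nat -> V) l : seq_lim u l ->
  exists K, 0 <= K /\ forall m, vnorm (u m) <= K.
Proof.
  intro H. destruct (H 1 ltac:(lra)) as [N HN].
  destruct (fin_max (fun m => vnorm (u m)) N) as [K [HK0 HK]].
  exists (Rmax K (vnorm l + 1)). split. eapply Rle_trans; [apply HK0| apply Rmax_l].
  intro m. destruct (Nat.lt_ge_cases m N).
  - eapply Rle_trans; [apply HK; auto| apply Rmax_l].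
  - eapply Rle_trans; [|apply Rmax_r].
    replace (u m) with (vadd (vsub (u m) l) l) by veq (u m :: l :: nil).
    eapply Rle_trans. apply vnorm_triangle. specialize (HN m H0). lra.
Qed.

Lemma floor_nat t rho : 0 <= t -> 0 < rho ->
  exists i : nat, INR i * rho <= t < INR (S i) * rho.
Proof.
  intros Ht Hr. destruct (arch_nat (t / rho)) as [n Hn].
  assert (Hn' : t < INR n * rho).
  { apply Rmult_lt_compat_r with (r := rho) in Hn; auto.
    unfold Rdiv in Hn. rewrite Rmult_assoc, Rinv_l, Rmult_1_r in Hn; lra. }
  clear Hn. induction n as [|n IH].
  - simpl in Hn'. lra.
  - destruct (Rlt_dec t (INR n * rho)). apply IH; auto.
    exists n. split; lra.
Qed.

Lemma fin_K (g : nat -> nat -> R) (L : nat) :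
  (forall i, exists K, 0 <= K /\ forall m, g i m <= K) ->
  exists K, 0 <= K /\ forall i m, (i < L)%nat -> g i m <= K.
Proof.
  intro H. induction L as [|L [K [HK0 HK]]].
  - exists 0. split. lra. intros; lia.
  - destruct (H L) as [K2 [HK2 HK2']].
    exists (Rmax K K2). split. eapply Rle_trans; [apply HK0| apply Rmax_l].
    intros i m Hi. destruct (Nat.eq_dec i L). subst. eapply Rle_trans; [apply HK2'|apply Rmax_r].
    eapply Rle_trans; [apply HK; lia| apply Rmax_l].
Qed.

Section Main.
Variable X : NormedSpace.
Variable Xm : nat -> NormedSpace.
Variable P : forall m, X -> Xm m.
Variable J : forall m, Xm m -> X.
Variables MJ MP : R.
Hypothesis HPb : forall m, bounded_linear (P m).
Hypothesis HJb : forall m, bounded_linear (J m).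
Hypothesis Hi : forall m (y : Xm m), P m (J m y) = y.
Hypothesis Hii : forall x : X, seq_lim (fun m => J m (P m x)) x.
Hypothesis HMJ : 0 < MJ.
Hypothesis HMP : 0 < MP.
Hypothesis Hiii : forall m, opnorm_le (J m) MJ /\ opnorm_le (P m) MP.
Variable S : R -> X -> X.
Variable DB : X -> Prop.
Variable B : X -> X.
Hypothesis HS : generates DB B S.
Variable Sm : forall m, R -> Xm m -> Xm m.
Variable DBm : forall m, Xm m -> Prop.
Variable Bm : forall m, Xm m -> Xm m.
Hypothesis HSm : forall m, generates (DBm m) (Bm m) (Sm m).
Variables MS om : R.
Hypothesis HMS : 1 <= MS.
Hypothesis HSb : forall h, 0 < h -> opnorm_le (S h) (MS * exp (om * h)).
Hypothesis HSmb : forall m h, 0 < h -> opnorm_le (Sm m h) (MS * exp (om * h)).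
Hypothesis HBconv : forall x, DB x ->
     (forall m, DBm m (P m x)) /\ seq_lim (fun m => J m (Bm m (P m x))) (B x).

Notation C := (Cb MS om).

Lemma Plin m : is_linear (P m). Proof. apply HPb. Qed.
Lemma Jlin m : is_linear (J m). Proof. apply HJb. Qed.
Lemma Pnb m v : vnorm (P m v) <= MP * vnorm v. Proof. apply Hiii. Qed.
Lemma Jnb m v : vnorm (J m v) <= MJ * vnorm v. Proof. apply Hiii. Qed.

Lemma Smb m t h y : 0 <= t <= h -> vnorm (Sm m t y) <= C h * vnorm y.
Proof. intro. eapply T_bound; eauto. Qed.
Lemma Sb t h y : 0 <= t <= h -> vnorm (S t y) <= C h * vnorm y.
Proof. intro. eapply T_bound; eauto. Qed.

Lemma Bm_close m z : vnorm (vsub (Bm m (P m z)) (P m (B z))) <=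
  MP * vnorm (vsub (J m (Bm m (P m z))) (B z)).
Proof.
  rewrite <- (Hi m (Bm m (P m z))) at 1. rewrite <- (lin_sub' _ _ _ (Plin m)). apply Pnb.
Qed.

Lemma C_pos h : 0 <= h -> 1 <= C h.
Proof. intro. apply Cb_ge1; auto. Qed.

Lemma S_inv t y : 0 <= t -> DB y -> DB (S t y) /\ B (S t y) = S t (B y).
Proof. apply (T_inv _ _ _ _ HS MS om HMS HSb). Qed.
Lemma S_dom t y : 0 <= t -> DB y -> DB (S t y).
Proof. intros; apply S_inv; auto. Qed.
Lemma S_lin t : 0 <= t -> is_linear (S t). Proof. apply (T_lin _ _ _ _ HS). Qed.
Lemma Sm_lin m t : 0 <= t -> is_linear (Sm m t). Proof. apply (T_lin _ _ _ _ (HSm m)). Qed.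
Lemma S0 y : S 0 y = y. Proof. apply (T0 _ _ _ _ HS). Qed.
Lemma Sm0 m y : Sm m 0 y = y. Proof. apply (T0 _ _ _ _ (HSm m)). Qed.
Lemma S_add t s y : 0 <= t -> 0 <= s -> S (t + s) y = S t (S s y).
Proof. apply (T_add _ _ _ _ HS). Qed.
Lemma Sm_add m t s y : 0 <= t -> 0 <= s -> Sm m (t + s) y = Sm m t (Sm m s y).
Proof. apply (T_add _ _ _ _ (HSm m)). Qed.
Lemma DB_sub y1 y2 : DB y1 -> DB y2 -> DB (vsub y1 y2). Proof. apply (D_sub _ _ _ _ HS). Qed.
Lemma DB_scal c y : DB y -> DB (vscal c y). Proof. apply (D_scal _ _ _ _ HS). Qed.
Lemma genS y : DB y -> lim_0plus (fun h => vscal (/ h) (vsub (S h y) y)) (B y).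
Proof. apply (gen_lim _ _ _ _ HS). Qed.
Lemma S_unif t t' h y : 0 <= t -> t <= t' -> t' <= h ->
  vnorm (vsub (S t' y) (S t y)) <= C h * vnorm (vsub (S (t' - t) y) y).
Proof. apply (T_cont_unif _ _ _ _ HS MS om HMS HSb). Qed.
Lemma Sm_mvt m y d K : DBm m y -> 0 < d ->
  (forall r, 0 <= r <= d -> vnorm (vsub (Sm m r (Bm m y)) (Bm m y)) <= K) ->
  vnorm (vsub (vsub (Sm m d y) y) (vscal d (Bm m y))) <= d * K.
Proof. apply (mvt _ _ _ _ (HSm m) MS om HMS (HSmb m)). Qed.
Lemma Sm_smooth m y s : DBm m y -> 0 < s <= 1 ->
  vnorm (vsub (Sm m s y) y) <= s * (C 1 + 2) * vnorm (Bm m y).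
Proof. apply (smooth _ _ _ _ (HSm m) MS om HMS (HSmb m)). Qed.

Lemma equi x h : DB x -> 0 <= h -> forall eps, 0 < eps ->
  exists sig, 0 < sig <= 1 /\ forall m t s, 0 <= t <= h -> 0 < s <= sig ->
    vnorm (vsub (Sm m s (P m (S t (B x)))) (P m (S t (B x)))) <= eps.
Proof.
  intros Hx Hh eps He.
  assert (HC1 := C_pos 1 ltac:(lra)). assert (HCh := C_pos h Hh).
  set (c := (C 1 + 1) * MP * (C h + 1)).
  assert (Hc : 0 < c) by (unfold c; apply Rmult_lt_0_compat; [apply Rmult_lt_0_compat|]; lra).
  set (e1 := eps / (2 * c)).
  assert (He1 : 0 < e1) by (unfold e1; apply Rdiv_lt_0_compat; lra).
  destruct (genS x Hx e1 He1) as [rho [Hrho Hr]].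
  set (eta := rho / 2).
  set (u := vscal (/ eta) (vsub (S eta x) x)).
  assert (Hu : vnorm (vsub u (B x)) <= e1) by (apply Hr; unfold eta; lra).
  assert (Du : DB u).
  { unfold u. apply (D_scal _ _ _ _ HS). apply (D_sub _ _ _ _ HS); auto.
    apply S_dom; auto. unfold eta; lra. }
  assert (Dv : forall t, 0 <= t -> DB (S t u)) by (intros; apply S_dom; auto).
  assert (Hcont : forall y, lim_0plus (fun t => S t y) y) by (destruct HS as [[_ [_ [_ Hc']]] _]; exact Hc').
  destruct (Hcont u (e1 / C h)) as [rho2 [Hrho2 Hr2]].
  { apply Rdiv_lt_0_compat; lra. }
  assert (Hunif : forall t t', 0 <= t -> t <= t' -> t' <= h -> t' - t < rho2 ->
      vnorm (vsub (S t' u) (S t u)) <= e1).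
  { intros t t' H1 H2 H3 H4. eapply Rle_trans. apply (S_unif t t' h); lra.
    destruct (Req_dec t t') as [E|E].
    - subst. replace (t' - t') with 0 by ring. rewrite S0.
      replace (vsub u u) with (@vzero X) by veq (u :: nil). rewrite vnorm_zero. lra.
    - specialize (Hr2 (t' - t) ltac:(lra)).
      apply Rmult_le_reg_r with (/ C h). apply Rinv_0_lt_compat; lra.
      rewrite Rmult_comm, <- Rmult_assoc, Rinv_l, Rmult_1_l by lra. exact Hr2. }
  set (r3 := rho2 / 2).
  destruct (arch_nat (h / r3)) as [L HL].
  assert (HL' : h < INR L * r3).
  { apply Rmult_lt_compat_r with (r := r3) in HL. 2: unfold r3; lra.
    unfold Rdiv in HL. rewrite Rmult_assoc, Rinv_l, Rmult_1_r in HL; unfold r3 in *; lra. }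
  assert (Hbi : forall i, exists K, 0 <= K /\ forall m,
     vnorm (J m (Bm m (P m (S (INR i * r3) u)))) <= K).
  { intro i. eapply seq_bounded. apply HBconv. apply Dv.
    apply Rmult_le_pos. apply pos_INR. unfold r3; lra. }
  destruct (fin_K (fun i m => vnorm (J m (Bm m (P m (S (INR i * r3) u))))) L Hbi) as [K [HK0 HK]].
  set (k2 := (C 1 + 2) * MP * K + 1).
  assert (Hk2 : 0 < k2) by (unfold k2; assert (0 <= (C 1 + 2) * MP * K) by
      (apply Rmult_le_pos; [apply Rmult_le_pos|]; lra); lra).
  set (sig := Rmin 1 (eps / (2 * k2))).
  assert (Hsig0 : 0 < sig) by (apply Rmin_glb_lt; [lra| apply Rdiv_lt_0_compat; lra]).
  assert (Hsig1 : sig <= eps / (2 * k2)) by apply Rmin_r.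
  exists sig. split. split; [lra| apply Rmin_l].
  intros m t s Ht Hs.
  assert (Hr3 : 0 < r3) by (unfold r3; lra).
  destruct (floor_nat t r3) as [i [Hi1 Hi2]]; try lra.
  assert (HiL : (i < L)%nat).
  { apply INR_lt. apply Rmult_lt_reg_r with r3; lra. }
  set (ti := INR i * r3) in *.
  assert (Hti : 0 <= ti) by (unfold ti; apply Rmult_le_pos; [apply pos_INR|lra]).
  set (w := S t (B x)). set (vi := S ti u).
  assert (Hw1 : vnorm (vsub w (S t u)) <= C h * e1).
  { unfold w. rewrite <- (lin_sub' _ _ _ (S_lin t ltac:(lra))).
    eapply Rle_trans. apply (Sb t h); lra. rewrite vnorm_sub_sym.
    apply Rmult_le_compat_l; lra. }
  assert (Hsig2 : sig <= 1) by apply Rmin_l.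
  assert (Hw2 : vnorm (vsub (S t u) vi) <= e1).
  { unfold vi. apply Hunif; try lra. rewrite S_INR in Hi2. unfold ti. unfold r3 in *. lra. }
  assert (Hwv : vnorm (vsub w vi) <= C h * e1 + e1).
  { eapply Rle_trans. apply (vsub_triangle _ _ (S t u)). lra. }
  assert (Dvi : DB vi) by (apply Dv; auto).
  assert (HBvi : vnorm (Bm m (P m vi)) <= MP * K).
  { rewrite <- (Hi m (Bm m (P m vi))). eapply Rle_trans. apply Pnb.
    apply Rmult_le_compat_l. lra. apply (HK i m HiL). }
  assert (Hsm : vnorm (vsub (Sm m s (P m vi)) (P m vi)) <= s * (C 1 + 2) * (MP * K)).
  { eapply Rle_trans. apply Sm_smooth. apply HBconv; auto. lra.
    apply Rmult_le_compat_l; auto. apply Rmult_le_pos; lra. }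
  assert (Hdec : vsub (Sm m s (P m w)) (P m w) =
     vadd (vadd (Sm m s (P m (vsub w vi))) (vsub (Sm m s (P m vi)) (P m vi))) (vopp (P m (vsub w vi)))).
  { rewrite (lin_sub' _ _ _ (Plin m)), (lin_sub' _ _ _ (Sm_lin m s ltac:(lra))).
    veq (Sm m s (P m w) :: Sm m s (P m vi) :: P m w :: P m vi :: nil). }
  rewrite Hdec. eapply Rle_trans. apply vnorm_triangle. rewrite vnorm_opp.
  eapply Rle_trans. apply Rplus_le_compat_r. apply vnorm_triangle.
  assert (A1 : vnorm (Sm m s (P m (vsub w vi))) <= C 1 * (MP * vnorm (vsub w vi))).
  { eapply Rle_trans. apply (Smb m s 1). lra. apply Rmult_le_compat_l. lra. apply Pnb. }
  assert (A3 := Pnb m (vsub w vi)).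
  assert (Hnn := vnorm_nonneg _ (vsub w vi)).
  assert (B1 : (C 1 + 1) * (MP * vnorm (vsub w vi)) <= eps / 2).
  { apply Rle_trans with ((C 1 + 1) * (MP * (C h * e1 + e1))).
    apply Rmult_le_compat_l. lra. apply Rmult_le_compat_l; lra.
    replace ((C 1 + 1) * (MP * (C h * e1 + e1))) with (c * e1) by (unfold c; ring).
    unfold e1. right. field. lra. }
  assert (B2 : s * (C 1 + 2) * (MP * K) <= eps / 2).
  { apply Rle_trans with (s * k2). unfold k2.
    assert (0 <= s) by lra. nra.
    apply Rle_trans with (eps / (2 * k2) * k2). apply Rmult_le_compat_r; lra.
    right. field. lra. }
  lra.
Qed.

Lemma near_gen m z d eE e3 : DB z -> 0 < d <= 1 ->
  (forall r, 0 < r <= d -> vnorm (vsub (Sm m r (P m (B z))) (P m (B z))) <= eE) ->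
  vnorm (vsub (J m (Bm m (P m z))) (B z)) <= e3 ->
  vnorm (vsub (vsub (Sm m d (P m z)) (P m z)) (vscal d (Bm m (P m z)))) <= d * (eE + (C 1 + 1) * MP * e3).
Proof.
  intros Hz Hd HE H3.
  assert (HeE : 0 <= eE) by (eapply Rle_trans; [apply vnorm_nonneg| apply (HE d); lra]).
  assert (He3 : 0 <= e3) by (eapply Rle_trans; [apply vnorm_nonneg| apply H3]).
  assert (HC1 := C_pos 1 ltac:(lra)).
  apply Sm_mvt. apply HBconv; auto. lra.
  intros r Hr.
  set (wv := Bm m (P m z)). set (pb := P m (B z)).
  assert (Hc : vnorm (vsub wv pb) <= MP * e3).
  { eapply Rle_trans. apply Bm_close. apply Rmult_le_compat_l; lra. }
  assert (Hc0 := vnorm_nonneg _ (vsub wv pb)).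
  destruct (Req_dec r 0) as [E|E].
  - subst. rewrite Sm0. replace (vsub wv wv) with (@vzero (Xm m)) by veq (wv :: nil).
    rewrite vnorm_zero. assert (0 <= MP * e3) by (apply Rmult_le_pos; lra). nra.
  - replace (vsub (Sm m r wv) wv) with
      (vadd (vadd (Sm m r (vsub wv pb)) (vsub (Sm m r pb) pb)) (vopp (vsub wv pb))).
    2: { rewrite (lin_sub' _ _ _ (Sm_lin m r ltac:(lra))).
         veq (Sm m r wv :: Sm m r pb :: wv :: pb :: nil). }
    eapply Rle_trans. apply vnorm_triangle. rewrite vnorm_opp.
    eapply Rle_trans. apply Rplus_le_compat_r. apply vnorm_triangle.
    assert (A1 : vnorm (Sm m r (vsub wv pb)) <= C 1 * vnorm (vsub wv pb)) by (apply Smb; lra).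
    assert (A2 : vnorm (vsub (Sm m r pb) pb) <= eE) by (apply HE; lra).
    nra.
Qed.

Lemma P1 x : DB x -> forall eps, 0 < eps -> exists sig, 0 < sig /\ exists N, forall h m,
  0 < h <= sig -> (N <= m)%nat ->
  vnorm (vsub (vscal (/ h) (vsub (J m (Sm m h (P m x))) (J m (P m x)))) (B x)) <= eps.
Proof.
  intros Hx eps He.
  assert (HC1 := C_pos 1 ltac:(lra)).
  set (k := MJ * (C 1 + 1) * MP + 1).
  assert (Hk : 0 < k) by (unfold k; assert (0 < MJ * (C 1 + 1) * MP) by
     (apply Rmult_lt_0_compat; [apply Rmult_lt_0_compat|]; lra); lra).
  destruct (equi x 0 Hx ltac:(lra) (eps / (2 * MJ)) ltac:(apply Rdiv_lt_0_compat; lra))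
    as [sig [Hsig HE]].
  exists sig. split. lra.
  destruct (proj2 (HBconv x Hx) (eps / (2 * k)) ltac:(apply Rdiv_lt_0_compat; lra)) as [N HN].
  exists N. intros h m Hh Hm.
  specialize (HN m Hm).
  assert (Hng := near_gen m x h (eps / (2 * MJ)) (eps / (2 * k)) Hx ltac:(lra)).
  specialize (Hng ltac:(intros r Hr; pose proof (HE m 0 r ltac:(lra) ltac:(lra)) as HH;
    rewrite S0 in HH; exact HH) HN).
  set (y := P m x) in *. set (w := Bm m y) in *.
  replace (vsub (vscal (/ h) (vsub (J m (Sm m h y)) (J m y))) (B x)) with
    (vadd (vscal (/ h) (J m (vsub (vsub (Sm m h y) y) (vscal h w)))) (vsub (J m w) (B x))).
  2: { rewrite (lin_sub' _ _ _ (Jlin m)), (lin_sub' _ _ _ (Jlin m)), (lin_scal' _ _ _ (Jlin m)).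
       veq (J m (Sm m h y) :: J m y :: J m w :: B x :: nil). }
  eapply Rle_trans. apply vnorm_triangle. rewrite vnorm_scal.
  rewrite Rabs_pos_eq by (left; apply Rinv_0_lt_compat; lra).
  assert (A1 := Jnb m (vsub (vsub (Sm m h y) y) (vscal h w))).
  assert (A2 : / h * vnorm (J m (vsub (vsub (Sm m h y) y) (vscal h w))) <=
     MJ * (eps / (2 * MJ) + (C 1 + 1) * MP * (eps / (2 * k)))).
  { apply Rle_trans with (/ h * (MJ * (h * (eps / (2 * MJ) + (C 1 + 1) * MP * (eps / (2 * k)))))).
    apply Rmult_le_compat_l. left; apply Rinv_0_lt_compat; lra.
    eapply Rle_trans. apply A1. apply Rmult_le_compat_l; lra.
    right. field. lra. }
  assert (E : MJ * (eps / (2 * MJ) + (C 1 + 1) * MP * (eps / (2 * k))) + eps / (2 * k)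
     = eps / 2 + eps / 2 * ((MJ * (C 1 + 1) * MP + 1) / k)) by (field; lra).
  assert (E2 : (MJ * (C 1 + 1) * MP + 1) / k = 1) by (unfold k in *; field; lra).
  rewrite E2 in E.
  set (Q := MJ * (eps / (2 * MJ) + (C 1 + 1) * MP * (eps / (2 * k)))) in *.
  set (Z := / h * vnorm (J m (vsub (vsub (Sm m h y) y) (vscal h w)))) in *.
  lra.
Qed.

Lemma TK x h : DB x -> 0 < h -> seq_lim (fun m => J m (Sm m h (P m x))) (S h x).
Proof.
  intros Hx Hh eps He.
  assert (HC1 := C_pos 1 ltac:(lra)). assert (HCh := C_pos h ltac:(lra)).
  set (ep := eps / (2 * MJ)).
  assert (Hep : 0 < ep) by (unfold ep; apply Rdiv_lt_0_compat; lra).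
  set (kk := C h * h * (1 + (C 1 + 2) * MP + MP * C h)).
  assert (Hkk : 0 < kk).
  { unfold kk. apply Rmult_lt_0_compat. apply Rmult_lt_0_compat; lra.
    assert (0 <= (C 1 + 2) * MP) by (apply Rmult_le_pos; lra).
    assert (0 <= MP * C h) by (apply Rmult_le_pos; lra). lra. }
  set (e0 := ep / kk).
  assert (He0 : 0 < e0) by (unfold e0; apply Rdiv_lt_0_compat; lra).
  destruct (equi x h Hx ltac:(lra) e0 He0) as [sE [HsE HE]].
  destruct (genS x Hx e0 He0) as [rB [HrB HB]].
  assert (Hmin : 0 < Rmin sE rB) by (apply Rmin_glb_lt; lra).
  assert (Hm1 := Rmin_l sE rB). assert (Hm2 := Rmin_r sE rB).
  destruct (small_step h (Rmin sE rB) Hh Hmin) as [k [Hk Hkd]].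
  assert (Hk0 : 0 < INR k) by (apply lt_0_INR; lia).
  set (d := h / INR k) in *.
  assert (Hd : 0 < d) by (unfold d; apply Rdiv_lt_0_compat; lra).
  assert (Ek : INR k * d = h) by (unfold d; field; lra).
  set (tj := fun j : nat => h - INR (Datatypes.S j) * d).
  set (zj := fun j : nat => S (tj j) x).
  assert (Htj : forall j, (j < k)%nat -> 0 <= tj j <= h).
  { intros j Hj. unfold tj. assert (INR (Datatypes.S j) <= INR k) by (apply le_INR; lia).
    assert (0 <= INR (Datatypes.S j)) by apply pos_INR. split; nra. }
  destruct (fin_N (fun j m => vnorm (vsub (J m (Bm m (P m (zj j)))) (B (zj j))) <= e0) k)
    as [N1 HN1].
  { intros j Hj. assert (Hz : DB (zj j)) by (apply S_dom; [apply Htj; auto| exact Hx]).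
    apply (proj2 (HBconv (zj j) Hz)). auto. }
  destruct (Hii (S h x) (eps / 2) ltac:(lra)) as [N0 HN0].
  exists (Nat.max N0 N1). intros m Hm.
  set (u := fun j : nat => Sm m (INR j * d) (P m (S (h - INR j * d) x))).
  assert (Eu : vsub (Sm m h (P m x)) (P m (S h x)) = vsub (u k) (u O)).
  { unfold u. rewrite Ek. replace (h - h) with 0 by ring. rewrite S0.
    replace (INR 0 * d) with 0 by (simpl; ring). rewrite Sm0. f_equal. f_equal. f_equal. ring. }
  set (bb := C h * (d * (e0 + (C 1 + 1) * MP * e0) + MP * (C h * (d * e0)) + d * (MP * e0))).
  assert (Hkb : INR k * bb = ep).
  { unfold bb. replace (INR k * (C h * (d * (e0 + (C 1 + 1) * MP * e0) + MP * (C h * (d * e0)) + d * (MP * e0))))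
      with ((INR k * d) * C h * (1 + (C 1 + 2) * MP + MP * C h) * e0) by ring.
    rewrite Ek. unfold e0. replace (h * C h * (1 + (C 1 + 2) * MP + MP * C h)) with kk by (unfold kk; ring).
    field. lra. }
  assert (HD : vnorm (vsub (Sm m h (P m x)) (P m (S h x))) <= ep).
  { rewrite Eu, <- Hkb. apply telescope. intros j Hj.
    assert (Hjd0 : 0 <= INR j * d) by (apply Rmult_le_pos; [apply pos_INR|lra]).
    assert (Hjd1 : INR j * d + d <= h).
    { rewrite <- Ek. replace (INR j * d + d) with (INR (Datatypes.S j) * d) by (rewrite S_INR; ring).
      apply Rmult_le_compat_r. lra. apply le_INR. lia. }
    destruct (Htj j Hj) as [Ht0 Ht1].
    set (z := zj j). set (y := P m z).
    assert (Dz : DB z) by (apply S_dom; auto).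
    assert (Eus : u (Datatypes.S j) = Sm m (INR j * d) (Sm m d y)).
    { unfold u, y, z, zj, tj. replace (INR (Datatypes.S j) * d) with (INR j * d + d) by (rewrite S_INR; ring).
      rewrite Sm_add by lra. reflexivity. }
    assert (Euj : u j = Sm m (INR j * d) (P m (S d z))).
    { unfold u, z, zj, tj. replace (h - INR j * d) with (d + (h - INR (Datatypes.S j) * d)) by (rewrite S_INR; ring).
      assert (0 <= h - INR (Datatypes.S j) * d) by exact Ht0.
      rewrite S_add by lra. reflexivity. }
    rewrite Eus, Euj, <- (lin_sub' _ _ _ (Sm_lin m _ Hjd0)).
    eapply Rle_trans. apply (Smb m _ h). lra. unfold bb. apply Rmult_le_compat_l. lra.
    set (a := vsub (vsub (Sm m d y) y) (vscal d (Bm m y))).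
    set (b := vsub (vsub (S d z) z) (vscal d (B z))).
    set (c := vsub (Bm m y) (P m (B z))).
    assert (Est : vsub (Sm m d y) (P m (S d z)) = vadd (vadd a (vopp (P m b))) (vscal d c)).
    { unfold a, b, c. rewrite (lin_sub' _ _ _ (Plin m)), (lin_sub' _ _ _ (Plin m)),
        (lin_scal' _ _ _ (Plin m)). fold y.
      veq (Sm m d y :: y :: Bm m y :: P m (S d z) :: P m (B z) :: nil). }
    rewrite Est. eapply Rle_trans. apply vnorm_triangle.
    eapply Rle_trans. apply Rplus_le_compat_r. apply vnorm_triangle.
    rewrite vnorm_opp, vnorm_scal, Rabs_pos_eq by lra.
    assert (HBz : B z = S (tj j) (B x)) by (apply S_inv; auto).
    assert (Ha : vnorm a <= d * (e0 + (C 1 + 1) * MP * e0)).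
    { unfold a, y. apply near_gen; auto. lra.
      intros r Hr. rewrite HBz. apply HE; lra.
      apply HN1; auto. lia. }
    assert (Hbx : vnorm (vsub (vsub (S d x) x) (vscal d (B x))) <= d * e0).
    { replace (vsub (vsub (S d x) x) (vscal d (B x))) with
        (vscal d (vsub (vscal (/ d) (vsub (S d x) x)) (B x))) by veq (S d x :: x :: B x :: nil).
      rewrite vnorm_scal, Rabs_pos_eq by lra. apply Rmult_le_compat_l. lra. apply HB. lra. }
    assert (Hb : vnorm b <= C h * (d * e0)).
    { assert (Eb : b = S (tj j) (vsub (vsub (S d x) x) (vscal d (B x)))).
      { unfold b. rewrite HBz. unfold z, zj. rewrite <- S_add by lra.
        rewrite Rplus_comm, S_add by lra.
        rewrite (lin_sub' _ _ _ (S_lin _ Ht0)), (lin_sub' _ _ _ (S_lin _ Ht0)), (lin_scal' _ _ _ (S_lin _ Ht0)).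
        reflexivity. }
      rewrite Eb. eapply Rle_trans. apply (Sb _ h). lra. apply Rmult_le_compat_l; lra. }
    assert (Hc : vnorm c <= MP * e0).
    { unfold c, y. eapply Rle_trans. apply Bm_close. apply Rmult_le_compat_l. lra.
      apply HN1; auto. lia. }
    assert (HPb' : vnorm (P m b) <= MP * (C h * (d * e0))).
    { eapply Rle_trans. apply Pnb. apply Rmult_le_compat_l; lra. }
    assert (d * vnorm c <= d * (MP * e0)) by (apply Rmult_le_compat_l; lra).
    lra. }
  replace (vsub (J m (Sm m h (P m x))) (S h x)) with
    (vadd (J m (vsub (Sm m h (P m x)) (P m (S h x)))) (vsub (J m (P m (S h x))) (S h x))).
  2: { rewrite (lin_sub' _ _ _ (Jlin m)). veq (J m (Sm m h (P m x)) :: J m (P m (S h x)) :: S h x :: nil). }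
  eapply Rle_trans. apply vnorm_triangle.
  assert (A1 : vnorm (J m (vsub (Sm m h (P m x)) (P m (S h x)))) <= MJ * ep).
  { eapply Rle_trans. apply Jnb. apply Rmult_le_compat_l; lra. }
  assert (A2 : vnorm (vsub (J m (P m (S h x))) (S h x)) <= eps / 2) by (apply HN0; lia).
  assert (MJ * ep = eps / 2) by (unfold ep; field; lra). lra.
Qed.

Lemma small_n t sig : 0 < t -> 0 < sig -> exists N, forall n, (N <= n)%nat -> (1 <= n)%nat ->
  0 < t / INR n < sig.
Proof.
  intros Ht Hs. destruct (arch_nat (t / sig)) as [N HN]. exists N. intros n Hn H1.
  assert (Hn0 : 0 < INR n) by (apply lt_0_INR; lia).
  assert (INR N <= INR n) by (apply le_INR; auto).
  split. apply Rdiv_lt_0_compat; lra.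
  assert (t / sig < INR n) by lra.
  apply Rmult_lt_reg_r with (INR n / sig). apply Rdiv_lt_0_compat; lra.
  replace (t / INR n * (INR n / sig)) with (t / sig) by (field; lra).
  replace (sig * (INR n / sig)) with (INR n) by (field; lra). lra.
Qed.

Lemma final t (Ht : 0 < t) x (Hx : DB x) :
    let q := fun (n m : nat) =>
      vscal (/ (t / INR n)) (vsub (J m (Sm m (t / INR n) (P m x))) (J m (P m x))) in
    (forall eps, 0 < eps -> exists N : nat, forall n m,
        (1 <= n)%nat -> (N <= n)%nat -> (N <= m)%nat -> vnorm (vsub (q n m) (B x)) <= eps) /\
    (exists g : nat -> X, forall eps, 0 < eps -> exists N : nat, forall m n,
        (1 <= n)%nat -> (N <= m)%nat -> vnorm (vsub (q n m) (g n)) <= eps).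
Proof.
  intro q. split.
  - intros eps He. destruct (P1 x Hx eps He) as [sig [Hsig [N HN]]].
    destruct (small_n t sig Ht Hsig) as [N' HN'].
    exists (Nat.max N N'). intros n m H1 Hn Hm. unfold q. apply HN.
    specialize (HN' n ltac:(lia) H1). lra. lia.
  - exists (fun n => vscal (/ (t / INR n)) (vsub (S (t / INR n) x) x)).
    intros eps He.
    destruct (P1 x Hx (eps / 2) ltac:(lra)) as [sig [Hsig [N1 HN1]]].
    destruct (genS x Hx (eps / 2) ltac:(lra)) as [rho [Hrho Hr]].
    destruct (small_n t sig Ht Hsig) as [Na HNa].
    destruct (small_n t rho Ht Hrho) as [Nb HNb].
    set (K := Nat.max (Nat.max Na Nb) 1).
    destruct (fin_N (fun n m => (1 <= n)%nat ->
        vnorm (vsub (q n m) (vscal (/ (t / INR n)) (vsub (S (t / INR n) x) x))) <= eps) K)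
      as [Nf HNf].
    { intros n _. destruct n as [|n'].
      - exists O. intros; lia.
      - set (n := Datatypes.S n').
        assert (Hn0 : 0 < INR n) by (apply lt_0_INR; unfold n; lia).
        set (h := t / INR n).
        assert (Hh : 0 < h) by (unfold h; apply Rdiv_lt_0_compat; lra).
        destruct (TK x h Hx Hh (eps * h / 2)) as [Na' HNa']. nra.
        destruct (Hii x (eps * h / 2)) as [Nb' HNb']. nra.
        exists (Nat.max Na' Nb'). intros m Hm _. unfold q. fold n. fold h.
        replace (vsub (vscal (/ h) (vsub (J m (Sm m h (P m x))) (J m (P m x))))
                   (vscal (/ h) (vsub (S h x) x))) with
          (vscal (/ h) (vsub (vsub (J m (Sm m h (P m x))) (S h x)) (vsub (J m (P m x)) x)))
          by veq (J m (Sm m h (P m x)) :: J m (P m x) :: S h x :: x :: nil).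
        rewrite vnorm_scal, Rabs_pos_eq by (left; apply Rinv_0_lt_compat; lra).
        eapply Rle_trans. apply Rmult_le_compat_l. left; apply Rinv_0_lt_compat; lra.
        eapply Rle_trans. apply vnorm_triangle. rewrite vnorm_opp.
        apply Rplus_le_compat. apply HNa'; lia. apply HNb'; lia.
        right. field. lra. }
    exists (Nat.max N1 Nf). intros m n H1 Hm.
    destruct (Nat.lt_ge_cases n K) as [HnK|HnK].
    + apply HNf; auto. lia.
    + eapply Rle_trans. apply (vsub_triangle _ _ (B x)).
      assert (A1 : vnorm (vsub (q n m) (B x)) <= eps / 2).
      { unfold q. apply HN1. specialize (HNa n ltac:(lia) H1). lra. lia. }
      assert (A2 : vnorm (vsub (B x) (vscal (/ (t / INR n)) (vsub (S (t / INR n) x) x))) <= eps / 2).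
      { rewrite vnorm_sub_sym. apply Hr. apply HNb; lia. }
      lra.
Qed.

End Main.

Theorem mainTheorem4
  (X : NormedSpace) (HX : complete X)
  (Xm : nat -> NormedSpace) (HXm : forall m, complete (Xm m))
  (P : forall m, X -> Xm m) (J : forall m, Xm m -> X)
  (MJ MP : R)
  (* approximation properties *)
  (HPb : forall m, bounded_linear (P m))
  (HJb : forall m, bounded_linear (J m))
  (Hi : forall m (y : Xm m), P m (J m y) = y)
  (Hii : forall x : X, seq_lim (fun m => J m (P m x)) x)
  (HMJ : 0 < MJ) (HMP : 0 < MP)
  (Hiii : forall m, opnorm_le (J m) MJ /\ opnorm_le (P m) MP)
  (* semigroups and generators *)
  (S : R -> X -> X) (DB : X -> Prop) (B : X -> X)
  (HS : generates DB B S)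
  (Sm : forall m, R -> Xm m -> Xm m) (DBm : forall m, Xm m -> Prop)
  (Bm : forall m, Xm m -> Xm m)
  (HSm : forall m, generates (DBm m) (Bm m) (Sm m))
  (MS omegaS : R) (HMS : 1 <= MS)
  (HSb : forall h, 0 < h -> opnorm_le (S h) (MS * exp (omegaS * h)))
  (HSmb : forall m h, 0 < h -> opnorm_le (Sm m h) (MS * exp (omegaS * h)))
  (HBconv : forall x, DB x ->
     (forall m, DBm m (P m x)) /\ seq_lim (fun m => J m (Bm m (P m x))) (B x))
  (t0 : R) (Ht0 : 0 < t0) :
  forall t, 0 < t <= t0 ->
  forall x, DB x ->
    let q := fun (n m : nat) =>
      vscal (/ (t / INR n)) (vsub (J m (Sm m (t / INR n) (P m x))) (J m (P m x))) in
    (* double limit *)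
    (forall eps, 0 < eps -> exists N : nat, forall n m,
        (1 <= n)%nat -> (N <= n)%nat -> (N <= m)%nat -> vnorm (vsub (q n m) (B x)) <= eps) /\
    (* the limit as m -> oo is uniform in n *)
    (exists g : nat -> X, forall eps, 0 < eps -> exists N : nat, forall m n,
        (1 <= n)%nat -> (N <= m)%nat -> vnorm (vsub (q n m) (g n)) <= eps).
Proof.
  intros t Ht x Hx.
  exact (final X Xm P J MJ MP HPb HJb Hi Hii HMJ HMP Hiii S DB B HS Sm DBm Bm HSm MS omegaS HMS
    HSb HSmb HBconv t (proj1 Ht) x Hx).
Qed.
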